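(* Let $0<z_0<1$, $t>0$ and $r=e^t$. Then: (1) the largest $s>0$ with $B_\rho(z_0,s)\subset B_h(z_0,t)$ is $s=t$; (2) the smallest $s>0$ with $B_h(z_0,t)\subset B_\rho(z_0,s)$ is the number $s$ satisfying $$\operatorname{th}\frac{s}{2}=\frac{r-1}{\sqrt{(r+1)^2-4rz_0^2}}.$$
   Context: $\mathbb{B}^2$ is the open unit disk in $\mathbb{C}$. The hyperbolic metric is given by $\operatorname{sh}\frac{\rho_{\mathbb{B}^2}(x,y)}{2}=\frac{|x-y|}{\sqrt{(1-|x|^2)(1-|y|^2)}}$, and $B_\rho(z_0,s)=\{z\in\mathbb{B}^2:\rho_{\mathbb{B}^2}(z_0,z)<s\}$. For distinct $x,y\in\mathbb{B}^2$ the Hilbert metric is $h_{\mathbb{B}^2}(x,y)=\log\frac{|u-y||x-v|}{|u-x||y-v|}$, where $u,v$ are the intersection points of the line through $x,y$ with the unit circle, labelled so that $|u-x|<|u-y|$; $h_{\mathbb{B}^2}(x,x)=0$; and $B_h(z_0,t)=\{z\in\mathbb{B}^2:h_{\mathbb{B}^2}(z_0,z)<t\}$. *)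

(* Defs.v *)
From Stdlib Require Import Reals ClassicalEpsilon.
From Coquelicot Require Import Coquelicot.
Open Scope R_scope.

Definition in_disk (z : C) : Prop := Cmod z < 1.

Definition rho_disk (x y : C) : R :=
  2 * arcsinh (Cmod (x - y)%C / sqrt ((1 - Cmod x ^ 2) * (1 - Cmod y ^ 2))).

Definition hilbert_endpoints (x y u v : C) : Prop :=
  Cmod u = 1 /\ Cmod v = 1 /\ u <> v /\
  (exists a : R, u = (x + RtoC a * (y - x))%C) /\
  (exists b : R, v = (x + RtoC b * (y - x))%C) /\
  Cmod (u - x)%C < Cmod (u - y)%C.

(* Hilbert metric on the disk (u, v are uniquely determined for x <> y). *)
Definition hilbert_disk (x y : C) : R :=
  epsilon (inhabits 0) (fun d =>
    (x = y /\ d = 0) \/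
    (x <> y /\ exists u v, hilbert_endpoints x y u v /\
       d = ln ((Cmod (u - y)%C * Cmod (x - v)%C) / (Cmod (u - x)%C * Cmod (y - v)%C)))).

Definition ball_rho (z0 : C) (s : R) (z : C) : Prop :=
  in_disk z /\ rho_disk z0 z < s.

Definition ball_h (z0 : C) (t : R) (z : C) : Prop :=
  in_disk z /\ hilbert_disk z0 z < t.

Definition set_incl (A B : C -> Prop) : Prop := forall z, A z -> B z.

(* Main.v *)
Require Import Defs.
From Stdlib Require Import Reals Lra Psatz ClassicalEpsilon.
From Coquelicot Require Import Coquelicot.
Open Scope R_scope.

Lemma cm_line (w : C) (k dx dy : R) :
  fst w = k * dx -> snd w = k * dy -> Cmod w = Rabs k * sqrt (dx ^ 2 + dy ^ 2).
Proof.
  intros H1 H2. unfold Cmod. rewrite H1, H2.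
  replace ((k * dx) ^ 2 + (k * dy) ^ 2) with (Rsqr k * (dx ^ 2 + dy ^ 2)) by (unfold Rsqr; ring).
  rewrite sqrt_mult_alt by apply Rle_0_sqr. rewrite sqrt_Rsqr_abs. reflexivity.
Qed.

Lemma sqrt_eq1 X : 0 <= X -> sqrt X = 1 -> X = 1.
Proof. intros H E. rewrite <- (sqrt_sqrt X H), E. ring. Qed.

Lemma cm2_nonneg (w : C) : 0 <= fst w ^ 2 + snd w ^ 2.
Proof. nra. Qed.

Lemma hilb_eq (z0 p q a b : R) :
  let A := (p - z0) ^ 2 + q ^ 2 in let B := z0 * (p - z0) in let c := 1 - z0 ^ 2 in
  0 < A -> a < 0 -> 1 < b -> A * a ^ 2 + 2 * B * a = c -> A * b ^ 2 + 2 * B * b = c ->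
  hilbert_disk (RtoC z0) (p, q) = ln ((1 - a) * b / ((- a) * (b - 1))).
Proof.
  intros A B c HA Ha Hb Ea Eb.
  assert (Vs : A * (a + b) = - 2 * B).
  { assert (A * (a - b) * (a + b) = - 2 * B * (a - b)) by nra.
    apply Rmult_eq_reg_r with (a - b); [lra| lra]. }
  assert (Vp : A * (a * b) = - c) by nra.
  assert (HsA : 0 < sqrt A) by (apply sqrt_lt_R0; lra).
  assert (Hval : forall u v, hilbert_endpoints (RtoC z0) (p, q) u v ->
     ln ((Cmod (u - (p, q))%C * Cmod (RtoC z0 - v)%C) / (Cmod (u - RtoC z0)%C * Cmod ((p, q) - v)%C))
     = ln ((1 - a) * b / ((- a) * (b - 1)))).
  { intros u v [Hu [Hv [Huv [[a' Ea'] [[b' Eb'] Hlt]]]]]. subst u v.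
    assert (Ea2 : A * a' ^ 2 + 2 * B * a' = c).
    { apply (sqrt_eq1 _ (cm2_nonneg _)) in Hu.
      revert Hu; unfold A, B, c, RtoC, Cplus, Cmult, Cminus, Copp; simpl; nra. }
    assert (Eb2 : A * b' ^ 2 + 2 * B * b' = c).
    { apply (sqrt_eq1 _ (cm2_nonneg _)) in Hv.
      revert Hv; unfold A, B, c, RtoC, Cplus, Cmult, Cminus, Copp; simpl; nra. }
    assert (Hab' : a' <> b') by (intro E; apply Huv; subst; reflexivity).
    assert (Ha' : a' < 1/2).
    { rewrite (cm_line _ a' (p - z0) q) in Hlt by (unfold RtoC, Cplus, Cmult, Cminus, Copp; simpl; ring).
      rewrite (cm_line _ (a' - 1) (p - z0) q) in Hlt by (unfold RtoC, Cplus, Cmult, Cminus, Copp; simpl; ring).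
      fold A in Hlt.
      apply Rmult_lt_reg_r in Hlt; [|exact HsA].
      destruct (Rle_or_lt a' (1/2)) as [H|H]; [| exfalso; revert Hlt; unfold Rabs; repeat destruct Rcase_abs; lra].
      destruct H; [exact H| subst a'; exfalso; revert Hlt; unfold Rabs; repeat destruct Rcase_abs; lra]. }
    assert (Fa : A * ((a' - a) * (a' - b)) = 0) by nra.
    assert (a' = a).
    { apply Rmult_integral in Fa. destruct Fa as [F|F]; [lra|].
      apply Rmult_integral in F. destruct F; lra. }
    subst a'.
    assert (Fb : A * ((b' - a) * (b' - b)) = 0) by nra.
    assert (b' = b).
    { apply Rmult_integral in Fb. destruct Fb as [F|F]; [lra|].
      apply Rmult_integral in F. destruct F; lra. }
    subst b'.
    rewrite (cm_line _ (a - 1) (p - z0) q) by (unfold RtoC, Cplus, Cmult, Cminus, Copp; simpl; ring).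
    rewrite (cm_line _ (- b) (p - z0) q) by (unfold RtoC, Cplus, Cmult, Cminus, Copp; simpl; ring).
    rewrite (cm_line _ a (p - z0) q) by (unfold RtoC, Cplus, Cmult, Cminus, Copp; simpl; ring).
    rewrite (cm_line _ (1 - b) (p - z0) q) by (unfold RtoC, Cplus, Cmult, Cminus, Copp; simpl; ring).
    fold A. f_equal.
    rewrite (Rabs_left1 (a - 1)) by lra. rewrite (Rabs_left1 (- b)) by lra.
    rewrite (Rabs_left1 a) by lra. rewrite (Rabs_left1 (1 - b)) by lra.
    field. split; [lra|]. split; lra. }
  assert (Hne : RtoC z0 <> (p, q)).
  { intro E. unfold RtoC in E. injection E. intros; subst. unfold A in HA. lra. }
  assert (Hex : exists u v, hilbert_endpoints (RtoC z0) (p, q) u v).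
  { exists (RtoC z0 + RtoC a * ((p, q) - RtoC z0))%C, (RtoC z0 + RtoC b * ((p, q) - RtoC z0))%C.
    split; [| split; [| split; [| split; [| split]]]].
    - unfold Cmod, RtoC, Cplus, Cmult, Cminus, Copp; simpl.
      match goal with |- sqrt ?X = 1 => replace X with 1 by (unfold A, B, c in *; nra) end.
      apply sqrt_1.
    - unfold Cmod, RtoC, Cplus, Cmult, Cminus, Copp; simpl.
      match goal with |- sqrt ?X = 1 => replace X with 1 by (unfold A, B, c in *; nra) end.
      apply sqrt_1.
    - intro E. unfold RtoC, Cplus, Cmult, Cminus, Copp in E; simpl in E. injection E. intros E2 E1.
      assert ((a - b) * (p - z0) = 0) by lra. assert ((a - b) * q = 0) by lra.
      apply Rmult_integral in H. apply Rmult_integral in H0. unfold A in HA.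
      destruct H; destruct H0; try lra. subst. nra.
    - exists a; reflexivity.
    - exists b; reflexivity.
    - rewrite (cm_line _ a (p - z0) q) by (unfold RtoC, Cplus, Cmult, Cminus, Copp; simpl; ring).
      rewrite (cm_line _ (a - 1) (p - z0) q) by (unfold RtoC, Cplus, Cmult, Cminus, Copp; simpl; ring).
      apply Rmult_lt_compat_r; [exact HsA|].
      rewrite (Rabs_left a) by lra. rewrite (Rabs_left1 (a - 1)) by lra. lra. }
  unfold hilbert_disk.
  match goal with |- epsilon ?i ?P = _ => 
    assert (HP : P (epsilon i P)) by (apply epsilon_spec; destruct Hex as [u [v Huv]];
      eexists; right; split; [exact Hne| exists u, v; split; [exact Huv| reflexivity]]) end.
  destruct HP as [[E _]|[_ [u [v [Huv E]]]]]; [contradiction|].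
  rewrite E. apply Hval. exact Huv.
Qed.

Definition Qv (z0 p q : R) : R :=
  Cmod (RtoC z0 - (p, q))%C / sqrt ((1 - Cmod (RtoC z0) ^ 2) * (1 - Cmod (p, q) ^ 2)).

Lemma rho_Qv z0 p q : rho_disk (RtoC z0) (p, q) = 2 * arcsinh (Qv z0 p q).
Proof. reflexivity. Qed.

Lemma Qv_prop z0 p q : 0 < z0 < 1 -> p ^ 2 + q ^ 2 < 1 ->
  0 <= Qv z0 p q /\
  Qv z0 p q ^ 2 * ((1 - z0 ^ 2) * (1 - (p ^ 2 + q ^ 2))) = (p - z0) ^ 2 + q ^ 2.
Proof.
  intros Hz Hd.
  assert (E1 : Cmod (RtoC z0) ^ 2 = z0 ^ 2).
  { unfold Cmod, RtoC; simpl fst; simpl snd. rewrite pow2_sqrt by nra. ring. }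
  assert (E2 : Cmod (p, q) ^ 2 = p ^ 2 + q ^ 2).
  { unfold Cmod; simpl fst; simpl snd. rewrite pow2_sqrt by nra. ring. }
  assert (E3 : Cmod (RtoC z0 - (p, q))%C = sqrt ((p - z0) ^ 2 + q ^ 2)).
  { unfold Cmod, RtoC, Cminus, Cplus, Copp; simpl fst; simpl snd. f_equal. ring. }
  unfold Qv. rewrite E1, E2, E3.
  assert (Hc : 0 < (1 - z0 ^ 2) * (1 - (p ^ 2 + q ^ 2))) by (apply Rmult_lt_0_compat; nra).
  assert (Hs : 0 < sqrt ((1 - z0 ^ 2) * (1 - (p ^ 2 + q ^ 2)))) by (apply sqrt_lt_R0; lra).
  split.
  - apply Rdiv_le_0_compat; [apply sqrt_pos | exact Hs].
  - unfold Rdiv. rewrite Rpow_mult_distr. rewrite pow_inv. rewrite (pow2_sqrt ((p - z0) ^ 2 + q ^ 2)) by (apply Rplus_le_le_0_compat; apply pow2_ge_0). rewrite pow2_sqrt by lra.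
    field. split; intro; nra.
Qed.

Lemma sinh_sq s : 4 * sinh (s / 2) ^ 2 * exp s = (exp s - 1) ^ 2.
Proof.
  unfold sinh. replace s with (s/2 + s/2) at 3 4 by field.
  rewrite exp_plus. rewrite exp_Ropp.
  assert (0 < exp (s/2)) by apply exp_pos. field. lra.
Qed.

Lemma sinh_pos s : 0 < s -> 0 < sinh (s / 2).
Proof.
  intro H. unfold sinh. assert (exp (- (s/2)) < exp (s/2)) by (apply exp_increasing; lra). lra.
Qed.

Lemma arcsinh_lt_iff Q s : 0 <= Q -> 0 < s ->
  (2 * arcsinh Q < s <-> 4 * Q ^ 2 * exp s < (exp s - 1) ^ 2).
Proof.
  intros HQ Hs. rewrite <- sinh_sq. pose proof (sinh_pos s Hs) as Hp.
  split; intro H.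
  - assert (Q < sinh (s/2)).
    { destruct (Rlt_or_le Q (sinh (s/2))) as [h|h]; [exact h|].
      apply arcsinh_le in h. rewrite arcsinh_sinh in h. lra. }
    pose proof (exp_pos s). apply Rmult_lt_compat_r; [exact (exp_pos s)|]. nra.
  - assert (Q < sinh (s/2)).
    { pose proof (exp_pos s).
      destruct (Rlt_or_le Q (sinh (s/2))) as [h|h]; [exact h|].
      exfalso. assert (sinh (s/2) ^ 2 <= Q ^ 2) by nra. nra. }
    apply arcsinh_lt in H0. rewrite arcsinh_sinh in H0. lra.
Qed.

Lemma ln_lt_iff R t : 0 < R -> (ln R < t <-> R < exp t).
Proof.
  intro H. split; intro h.
  - rewrite <- (exp_ln R H). apply exp_increasing. exact h.
  - rewrite <- (ln_exp t). apply ln_increasing; assumption.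
Qed.

Lemma gen z0 p q : 0 < z0 < 1 -> p ^ 2 + q ^ 2 < 1 -> 0 < (p - z0) ^ 2 + q ^ 2 ->
  exists R S2, 1 < R /\ hilbert_disk (RtoC z0) (p, q) = ln R /\
    Qv z0 p q ^ 2 * S2 * R = (R - 1) ^ 2 /\ 4 * (1 - z0 ^ 2) <= S2 <= 4.
Proof.
  intros Hz Hd HA0.
  set (A := (p - z0) ^ 2 + q ^ 2) in *. set (B := z0 * (p - z0)). set (c := 1 - z0 ^ 2).
  assert (Hc : 0 < c) by (unfold c; nra).
  assert (Hcy : 0 < c - A - 2 * B) by (unfold c, A, B; nra).
  set (D := sqrt (B ^ 2 + A * c)).
  assert (HD : D ^ 2 = B ^ 2 + A * c) by (unfold D; apply pow2_sqrt; nra).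
  assert (HD0 : 0 <= D) by apply sqrt_pos.
  set (a := (- B - D) / A). set (b := (- B + D) / A).
  assert (Aa : A * a = - B - D) by (unfold a; field; lra).
  assert (Ab : A * b = - B + D) by (unfold b; field; lra).
  assert (Ha : a < 0).
  { assert (D > - B) by nra. apply (Rmult_lt_reg_l A); [lra|]. lra. }
  assert (Hb : 1 < b).
  { assert (D > A + B) by nra. apply (Rmult_lt_reg_l A); [lra|]. lra. }
  assert (Ea : A * a ^ 2 + 2 * B * a = c).
  { apply (Rmult_eq_reg_l A); [|lra]. replace (A * (A * a ^ 2 + 2 * B * a)) with ((A * a) ^ 2 + 2 * B * (A * a)) by ring.
    rewrite Aa. nra. }
  assert (Eb : A * b ^ 2 + 2 * B * b = c).
  { apply (Rmult_eq_reg_l A); [|lra]. replace (A * (A * b ^ 2 + 2 * B * b)) with ((A * b) ^ 2 + 2 * B * (A * b)) by ring.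
    rewrite Ab. nra. }
  clearbody a b.   pose proof (hilb_eq z0 p q a b HA0 Ha Hb Ea Eb) as HH.
  destruct (Qv_prop z0 p q Hz Hd) as [HQ0 HQ].
  assert (Ec : c = A * (- a) * b) by nra.
  assert (Ecy : 1 - (p ^ 2 + q ^ 2) = A * (1 - a) * (b - 1)).
  { replace (1 - (p ^ 2 + q ^ 2)) with (c - A - 2 * B) by (unfold c, A, B; ring). nra. }
  fold c A in HQ. rewrite Ecy, Ec in HQ.
  assert (HY : 0 < A * (- a) * b * (1 - a) * (b - 1)) by (repeat apply Rmult_lt_0_compat; lra).
  assert (HQ2 : Qv z0 p q ^ 2 = / (A * (- a) * b * (1 - a) * (b - 1))).
  { assert (HQ' : (Qv z0 p q ^ 2 * (A * (- a) * b * (1 - a) * (b - 1)) - 1) * A = 0).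
    { transitivity (Qv z0 p q ^ 2 * (A * - a * b * (A * (1 - a) * (b - 1))) - A); [ring | lra]. }
    apply Rmult_integral in HQ'. destruct HQ' as [HQ'|HQ']; [|lra].
    apply (Rmult_eq_reg_r (A * (- a) * b * (1 - a) * (b - 1))); [|lra].
    rewrite Rinv_l by lra. lra. }
  exists ((1 - a) * b / ((- a) * (b - 1))), (A * (b - a) ^ 2).
  split; [| split; [exact HH| split]].
  - apply (Rmult_lt_reg_r ((- a) * (b - 1))). + apply Rmult_lt_0_compat; lra.
    + unfold Rdiv. rewrite Rmult_assoc, Rinv_l by (apply Rgt_not_eq, Rmult_lt_0_compat; lra). lra.
  - rewrite HQ2. field. repeat split; lra.
  - assert (Vs : A * (a + b) = - 2 * B) by lra.
    assert (HS : A * (A * (b - a) ^ 2) = 4 * B ^ 2 + 4 * A * c).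
    { replace (A * (A * (b - a) ^ 2)) with ((A * (a + b)) ^ 2 - 4 * A * (A * (a * b))) by ring.
      rewrite Vs. replace (A * (a * b)) with (- c) by nra. ring. }
    split.
    + apply (Rmult_le_reg_l A); [lra|]. rewrite HS. nra.
    + apply (Rmult_le_reg_l A); [lra|]. rewrite HS. unfold B, c, A. nra.
Qed.

Lemma disk_iff p q : in_disk (p, q) <-> p ^ 2 + q ^ 2 < 1.
Proof.
  unfold in_disk, Cmod; simpl fst; simpl snd. split; intro H.
  - rewrite <- sqrt_1 in H. apply sqrt_lt_0_alt in H. exact H.
  - rewrite <- sqrt_1. apply sqrt_lt_1_alt. split; [nra | exact H].
Qed.

Lemma hd_self x : hilbert_disk x x = 0.
Proof.
  unfold hilbert_disk.
  match goal with |- epsilon ?i ?P = _ =>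
    assert (HP : P (epsilon i P)) by (apply epsilon_spec; exists 0; left; split; reflexivity) end.
  destruct HP as [[_ E]|[E _]]; [exact E| contradiction].
Qed.

Lemma Qv_self z0 : 0 < z0 < 1 -> Qv z0 z0 0 = 0.
Proof.
  intro Hz. destruct (Qv_prop z0 z0 0 Hz) as [H0 H]; [nra|].
  assert (Hc : 0 < (1 - z0 ^ 2) * (1 - (z0 ^ 2 + 0 ^ 2))) by (apply Rmult_lt_0_compat; nra).
  assert (Qv z0 z0 0 ^ 2 = 0).
  { apply (Rmult_eq_reg_r ((1 - z0 ^ 2) * (1 - (z0 ^ 2 + 0 ^ 2)))); [|lra]. rewrite H. ring. }
  nra.
Qed.

Lemma div_pos a b : 0 < a -> 0 < b -> 0 < a / b.
Proof. intros; unfold Rdiv; apply Rmult_lt_0_compat; [|apply Rinv_0_lt_compat]; assumption. Qed.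

Lemma exp_gt1 t : 0 < t -> 1 < exp t.
Proof. intro H. rewrite <- exp_0. apply exp_increasing. exact H. Qed.

Lemma part1a z0 t : 0 < z0 < 1 -> 0 < t ->
  set_incl (ball_rho (RtoC z0) t) (ball_h (RtoC z0) t).
Proof.
  intros Hz Ht [p q] [Hd Hr]. split; [exact Hd|]. apply disk_iff in Hd.
  rewrite rho_Qv in Hr. destruct (Qv_prop z0 p q Hz Hd) as [HQ0 _].
  apply arcsinh_lt_iff in Hr; [|exact HQ0|exact Ht].
  destruct (Req_dec ((p - z0) ^ 2 + q ^ 2) 0) as [E|E].
  - pose proof (pow2_ge_0 (p - z0)); pose proof (pow2_ge_0 q).
    assert (E1 : (p - z0) ^ 2 = 0) by lra. assert (E2 : q ^ 2 = 0) by lra.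
    assert (p - z0 = 0) by nra. assert (q = 0) by nra. assert (p = z0) by lra. subst.
    change (z0, 0) with (RtoC z0). rewrite hd_self. exact Ht.
  - destruct (gen z0 p q Hz Hd) as [R [S2 [HR [Hh [Hrel [HS1 HS2]]]]]].
    { pose proof (pow2_ge_0 (p - z0)); pose proof (pow2_ge_0 q); lra. }
    rewrite Hh. apply ln_lt_iff; [lra|].
    pose proof (exp_gt1 t Ht) as Hr1. set (r := exp t) in *.
    set (Q2 := Qv z0 p q ^ 2) in *. assert (HQ2 : 0 <= Q2) by (unfold Q2; nra).
    assert (H0 : 0 <= (4 - S2) * (Q2 * R)) by (apply Rmult_le_pos; nra).
    assert (H1 : (R - 1) ^ 2 <= 4 * Q2 * R) by nra.
    assert (H3 : (R - 1) ^ 2 * r <= 4 * Q2 * r * R) by nra.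
    assert (H2 : (R - 1) ^ 2 * r < (r - 1) ^ 2 * R) by nra.
    destruct (Rlt_or_le R r) as [h|h]; [exact h|].
    exfalso. assert (0 <= (R - r) * (R * r - 1)) by (apply Rmult_le_pos; nra). nra.
Qed.

Lemma part1b z0 t s : 0 < z0 < 1 -> 0 < t -> 0 < s ->
  set_incl (ball_rho (RtoC z0) s) (ball_h (RtoC z0) t) -> s <= t.
Proof.
  intros Hz Ht Hs Hinc. destruct (Rle_or_lt s t) as [h|h]; [exact h|]. exfalso.
  pose proof (exp_gt1 t Ht) as Hr1. pose proof (exp_increasing _ _ h) as HrE.
  set (r := exp t) in *. set (E := exp s) in *.
  set (m := 1 - z0). set (n := 1 + z0).
  assert (Hm : 0 < m) by (unfold m; lra). assert (Hn : 0 < n) by (unfold n; lra).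
  set (den := m + r * n).
  assert (Hden : 0 < den) by (unfold den; nra).
  set (l := (r - 1) * m * n / den).
  assert (Hl : 0 < l) by (unfold l; apply div_pos; [repeat apply Rmult_lt_0_compat|]; lra).
  assert (Eln : l + n = 2 * r * n / den) by (unfold l, den, m, n; field; unfold den, m, n in Hden; lra).
  assert (Elm : m - l = 2 * m / den) by (unfold l, den, m, n; field; unfold den, m, n in Hden; lra).
  assert (Hml : l < m).
  { assert (0 < 2 * m / den) by (apply div_pos; lra). lra. }
  assert (Hd : (z0 + l) ^ 2 + 0 ^ 2 < 1).
  { assert (z0 + l < 1) by (unfold m in Hml; lra). nra. }
  destruct (Hinc (z0 + l, 0)) as [_ Hh].
  - split; [apply disk_iff; exact Hd|].
    rewrite rho_Qv. destruct (Qv_prop z0 (z0 + l) 0 Hz Hd) as [HQ0 HQ].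
    apply (proj2 (arcsinh_lt_iff _ _ HQ0 Hs)). fold E.
    set (Q2 := Qv z0 (z0 + l) 0 ^ 2) in *.
    replace ((1 - z0 ^ 2) * (1 - ((z0 + l) ^ 2 + 0 ^ 2))) with (m * n * ((m - l) * (l + n))) in HQ
      by (unfold m, n; ring).
    rewrite Eln, Elm in HQ.
    assert (HQr : (4 * r * Q2 - (r - 1) ^ 2) * (m ^ 2 * n ^ 2 / den ^ 2) = 0).
    { transitivity (Q2 * (m * n * (2 * m / den * (2 * r * n / den))) - (z0 + l - z0) ^ 2 - 0 ^ 2).
      - unfold l. field. lra.
      - rewrite HQ. ring. }
    apply Rmult_integral in HQr. destruct HQr as [HQr|HQr].
    + assert (4 * Q2 * E * r = (r - 1) ^ 2 * E) by nra.
      assert (0 < (E - r) * (E * r - 1)) by (apply Rmult_lt_0_compat; nra).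
      apply (Rmult_lt_reg_r r); [lra|]. nra.
    + exfalso. assert (0 < m ^ 2 * n ^ 2 / den ^ 2).
      { apply div_pos; [apply Rmult_lt_0_compat|]; apply pow_lt; lra. }
      lra.
  - rewrite (hilb_eq z0 (z0 + l) 0 (- (n / l)) (m / l)) in Hh.
    + replace ((1 - - (n / l)) * (m / l) / (- - (n / l) * (m / l - 1))) with r in Hh.
      * fold r in Hh. unfold r in Hh. rewrite ln_exp in Hh. lra.
      * replace (1 - - (n / l)) with ((l + n) / l) by (field; lra).
        replace (m / l - 1) with ((m - l) / l) by (field; lra).
        rewrite Eln, Elm. field. repeat split; lra.
    + nra.
    + assert (0 < n / l) by (apply div_pos; lra). lra.
    + apply (Rmult_lt_reg_r l); [lra|]. unfold Rdiv. rewrite Rmult_assoc, Rinv_l; lra.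
    + unfold m, n. field. lra.
    + unfold m, n. field. lra.
Qed.

Lemma part2 z0 t : 0 < z0 < 1 -> 0 < t ->
  let r := exp t in
  (exists s : R, 0 < s /\
     tanh (s / 2) = (r - 1) / sqrt ((r + 1) ^ 2 - 4 * r * z0 ^ 2) /\
     set_incl (ball_h (RtoC z0) t) (ball_rho (RtoC z0) s) /\
     forall s' : R, 0 < s' ->
       set_incl (ball_h (RtoC z0) t) (ball_rho (RtoC z0) s') -> s <= s').
Proof.
  intros Hz Ht r. pose proof (exp_gt1 t Ht) as Hr1. fold r in Hr1.
  set (c := 1 - z0 ^ 2). assert (Hc : 0 < c) by (unfold c; nra). assert (Hc1 : c < 1) by (unfold c; nra).
  set (N := (r + 1) ^ 2 - 4 * r * z0 ^ 2).
  assert (HN : N = (r - 1) ^ 2 + 4 * r * c) by (unfold N, c; ring).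
  assert (HN0 : 0 < N) by nra.
  set (sN := sqrt N). assert (HsN : sN ^ 2 = N) by (unfold sN; apply pow2_sqrt; lra).
  assert (HsN0 : 0 <= sN) by apply sqrt_pos.
  assert (HsNr : r - 1 < sN) by nra.
  set (K := (r - 1) / sN).
  assert (HKs : K * sN = r - 1) by (unfold K; field; lra).
  assert (HK0 : 0 < K) by (apply div_pos; lra).
  assert (HK1 : K < 1) by (apply (Rmult_lt_reg_r sN); lra).
  assert (HKN : K ^ 2 * N = (r - 1) ^ 2) by (rewrite <- HsN, <- HKs; ring).
  set (E := (1 + K) / (1 - K)).
  assert (HE : E * (1 - K) = 1 + K) by (unfold E; field; lra).
  assert (HE1 : 1 < E) by nra.
  assert (Key : r * c * (E - 1) ^ 2 = E * (r - 1) ^ 2).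
  { apply (Rmult_eq_reg_r ((1 - K) ^ 2)); [| apply pow_nonzero; lra].
    transitivity (r * c * 4 * K ^ 2).
    { replace (r * c * (E - 1) ^ 2 * (1 - K) ^ 2) with (r * c * (E * (1 - K) - (1 - K)) ^ 2) by ring.
      rewrite HE. ring. }
    transitivity ((1 + K) * (1 - K) * (r - 1) ^ 2).
    { rewrite HN in HKN. nra. }
    rewrite <- HE. ring. }
  assert (HEs : exp (ln E) = E) by (apply exp_ln; lra).
  exists (ln E). split; [| split; [| split]].
  - rewrite <- ln_1. apply ln_increasing; lra.
  - fold N sN K. unfold tanh, sinh, cosh. rewrite exp_Ropp.
    assert (He : exp (ln E / 2) * exp (ln E / 2) = E).
    { rewrite <- exp_plus. replace (ln E / 2 + ln E / 2) with (ln E) by field. exact HEs. }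
    pose proof (exp_pos (ln E / 2)) as Hp.
    set (e := exp (ln E / 2)) in *.
    replace ((e - / e) / 2 / ((e + / e) / 2)) with ((e * e - 1) / (e * e + 1)) by (field; split; nra).
    rewrite He. unfold E. field. lra.
  - intros [p q] [Hd Hh]. split; [exact Hd|]. apply disk_iff in Hd.
    rewrite rho_Qv. destruct (Qv_prop z0 p q Hz Hd) as [HQ0 _].
    assert (Hs0 : 0 < ln E) by (rewrite <- ln_1; apply ln_increasing; lra).
    apply (proj2 (arcsinh_lt_iff _ _ HQ0 Hs0)). rewrite HEs.
    destruct (Req_dec ((p - z0) ^ 2 + q ^ 2) 0) as [E0|E0].
    + pose proof (pow2_ge_0 (p - z0)); pose proof (pow2_ge_0 q).
      assert (E1 : (p - z0) ^ 2 = 0) by lra. assert (E2 : q ^ 2 = 0) by lra.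
      assert (p - z0 = 0) by nra. assert (q = 0) by nra. assert (p = z0) by lra. subst.
      rewrite Qv_self by exact Hz. nra.
    + destruct (gen z0 p q Hz Hd) as [R [S2 [HR [Hh' [Hrel [HS1 HS2]]]]]].
      { pose proof (pow2_ge_0 (p - z0)); pose proof (pow2_ge_0 q); lra. }
      rewrite Hh' in Hh. apply ln_lt_iff in Hh; [|lra]. fold r in Hh.
      set (Q2 := Qv z0 p q ^ 2) in *. assert (HQ2 : 0 <= Q2) by (unfold Q2; nra).
      fold c in HS1.
      assert (H0 : 0 <= (S2 - 4 * c) * (Q2 * R)) by (apply Rmult_le_pos; nra).
      assert (H1 : 4 * c * Q2 * R <= (R - 1) ^ 2) by nra.
      assert (H2 : 0 < (r - R) * (r * R - 1)) by (apply Rmult_lt_0_compat; nra).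
      assert (H3 : 4 * c * Q2 * r * R < (r - 1) ^ 2 * R) by nra.
      assert (H4 : 4 * c * Q2 * r < (r - 1) ^ 2) by (apply (Rmult_lt_reg_r R); nra).
      apply (Rmult_lt_reg_r (r * c)); [nra|].
      replace ((E - 1) ^ 2 * (r * c)) with (E * (r - 1) ^ 2) by (rewrite <- Key; ring).
      nra.
  - intros s' Hs' Hinc. destruct (Rle_or_lt (ln E) s') as [h|h]; [exact h|]. exfalso.
    pose proof (exp_gt1 s' Hs') as HE'1. pose proof (exp_increasing _ _ h) as HE'E.
    rewrite HEs in HE'E. set (E' := exp s') in *.
    set (sg := (E' - 1) ^ 2 / (4 * E')).
    assert (Hsg : 0 < sg) by (apply div_pos; nra).
    assert (Hsgr : 4 * r * c * sg < (r - 1) ^ 2).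
    { apply (Rmult_lt_reg_r (E * E')); [nra|].
      replace (4 * r * c * sg * (E * E')) with (r * c * (E' - 1) ^ 2 * E) by (unfold sg; field; lra).
      replace ((r - 1) ^ 2 * (E * E')) with (r * c * (E - 1) ^ 2 * E') by (rewrite Key; ring).
      assert (H0 : 0 < r * c * ((E - E') * (E * E' - 1))).
      { apply Rmult_lt_0_compat; [nra|]. apply Rmult_lt_0_compat; nra. }
      assert (r * c * (E - 1) ^ 2 * E' - r * c * (E' - 1) ^ 2 * E = r * c * ((E - E') * (E * E' - 1))) by ring.
      lra. }
    set (k2 := 1 + / (c * sg)).
    assert (Hk2 : 1 < k2) by (unfold k2; assert (0 < / (c * sg)) by (apply Rinv_0_lt_compat; nra); lra).
    set (k := sqrt k2).
    assert (Hkk : k ^ 2 = k2) by (unfold k; apply pow2_sqrt; lra).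
    assert (Hk : 1 < k) by (unfold k; rewrite <- sqrt_1; apply sqrt_lt_1_alt; lra).
    set (l := sqrt c / k).
    assert (Hsc : 0 < sqrt c) by (apply sqrt_lt_R0; lra).
    assert (Hl : 0 < l) by (apply div_pos; lra).
    assert (Hl2 : l ^ 2 = c / k2).
    { unfold l. unfold Rdiv. rewrite Rpow_mult_distr, pow_inv, pow2_sqrt by lra. rewrite Hkk. reflexivity. }
    assert (Hlc : l ^ 2 < c).
    { rewrite Hl2. apply (Rmult_lt_reg_r k2); [lra|]. unfold Rdiv. rewrite Rmult_assoc, Rinv_l by lra. nra. }
    assert (Hd : z0 ^ 2 + l ^ 2 < 1) by (unfold c in Hlc; lra).
    destruct (Hinc (z0, l)) as [_ Hr].
    + split; [apply disk_iff; exact Hd|].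
      rewrite (hilb_eq z0 z0 l (- k) k).
      * apply ln_lt_iff. { apply div_pos; nra. }
        fold r.
        assert (Hkr : r + 1 < k * (r - 1)).
        { assert (k2 * (r - 1) ^ 2 > (r + 1) ^ 2).
          { unfold k2. replace ((r + 1) ^ 2) with ((r - 1) ^ 2 + 4 * r) by ring.
            assert ((r - 1) ^ 2 * / (c * sg) > 4 * r).
            { apply (Rmult_lt_reg_r (c * sg)); [nra|].
              replace ((r - 1) ^ 2 * / (c * sg) * (c * sg)) with ((r - 1) ^ 2) by (field; nra). nra. }
            nra. }
          destruct (Rlt_or_le (r + 1) (k * (r - 1))) as [hh|hh]; [exact hh|]. exfalso.
          assert (0 <= (r + 1 - k * (r - 1)) * (r + 1 + k * (r - 1))) by (apply Rmult_le_pos; nra).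
          rewrite <- Hkk in H. nra. }
        apply (Rmult_lt_reg_r (- - k * (k - 1))); [nra|].
        unfold Rdiv. rewrite Rmult_assoc, Rinv_l by nra. nra.
      * nra.
      * lra.
      * lra.
      * replace ((z0 - z0) ^ 2 + l ^ 2) with (l ^ 2) by ring. rewrite Hl2. fold c. replace ((- k) ^ 2) with k2 by (rewrite <- Hkk; ring). field. lra.
      * replace ((z0 - z0) ^ 2 + l ^ 2) with (l ^ 2) by ring. rewrite Hl2. fold c. rewrite Hkk. field. lra.
    + rewrite rho_Qv in Hr. destruct (Qv_prop z0 z0 l Hz Hd) as [HQ0 HQ].
      apply arcsinh_lt_iff in Hr; [|exact HQ0|exact Hs']. fold E' in Hr.
      set (Q2 := Qv z0 z0 l ^ 2) in *.
      fold c in HQ.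
      assert (Ecy : 1 - (z0 ^ 2 + l ^ 2) = / (sg * k2)).
      { replace (1 - (z0 ^ 2 + l ^ 2)) with (c - l ^ 2) by (unfold c; ring). rewrite Hl2.
        unfold k2. field. split; [nra|]. split; [lra|].
        intro H. assert (0 < c * sg + 1) by nra. lra. }
      rewrite Ecy in HQ.
      assert (HQs : Q2 = sg).
      { replace ((z0 - z0) ^ 2 + l ^ 2) with (c / k2) in HQ by (rewrite Hl2; ring).
        apply (Rmult_eq_reg_r (c / (sg * k2))). 
        - transitivity (c / k2). { rewrite <- HQ. field. split; lra. } field. split; lra.
        - apply Rgt_not_eq, div_pos; nra. }
      assert (4 * Q2 * E' = (E' - 1) ^ 2) by (rewrite HQs; unfold sg; field; lra).
      lra.
Qed.

Theorem mainTheorem9 (z0 t : R) (hz0 : 0 < z0 < 1) (ht : 0 < t) :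
  let r := exp t in
  (* (1) t is the largest s > 0 with B_rho(z0,s) ⊂ B_h(z0,t) *)
  (set_incl (ball_rho (RtoC z0) t) (ball_h (RtoC z0) t) /\
   forall s : R, 0 < s ->
     set_incl (ball_rho (RtoC z0) s) (ball_h (RtoC z0) t) -> s <= t) /\
  (* (2) the smallest s > 0 with B_h(z0,t) ⊂ B_rho(z0,s) is the s with
         th(s/2) = (r-1)/sqrt((r+1)^2 - 4 r z0^2) *)
  (exists s : R, 0 < s /\
     tanh (s / 2) = (r - 1) / sqrt ((r + 1) ^ 2 - 4 * r * z0 ^ 2) /\
     set_incl (ball_h (RtoC z0) t) (ball_rho (RtoC z0) s) /\
     forall s' : R, 0 < s' ->
       set_incl (ball_h (RtoC z0) t) (ball_rho (RtoC z0) s') -> s <= s').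
Proof.
  intro r. split.
  - split; [exact (part1a z0 t hz0 ht)|].
    intros s Hs Hinc. exact (part1b z0 t s hz0 ht Hs Hinc).
  - exact (part2 z0 t hz0 ht).
Qed.
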